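(* If $\mathcal L$ is a purely resolving class of left $R$-modules, then every strict $\mathcal L$-atomic module belonging to $\mathcal L$ is strict Mittag-Leffler (i.e. strict $R\text{-Mod}$-atomic).
   Context: $R$ is a ring with $1$; modules are left $R$-modules. A module is purely generated by a class $\mathcal B$ if it is a pure-epimorphic image of a direct sum of modules from $\mathcal B$; $\mathrm{PGen}\,\mathcal B$ is the class of all such modules. A class is purely resolving if it equals $\mathrm{PGen}\,\mathcal B$ for some class $\mathcal B$ of pure-projective modules closed under finite direct sums. pp formulas as usual. For a class $\mathcal X$, $(M,\bar m)$ is an $\mathcal X$-free realization of a pp formula $\phi$ if $\bar m\in\phi(M)$ and for every $X\in\mathcal X$ and $\bar c\in\phi(X)$ there is a homomorphism $M\to X$ sending $\bar m$ to $\bar c$; $M$ is strict $\mathcal X$-atomic if every finite tuple of $M$ is an $\mathcal X$-free realization of some pp formula. Strict Mittag-Leffler = strict $R\text{-Mod}$-atomic (equivalent to Raynaud–Gruson's notion). *)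

(* Defs.v *)
(* Left R-modules = lmodType R; homomorphisms = functions f
   with [linear f] (MathComp's notation: forall a, {morph f : u v / a *: u + v}). *)
From HB Require Import structures.
From mathcomp Require Import all_boot all_order all_algebra.
Set Implicit Arguments. Unset Strict Implicit. Unset Printing Implicit Defensive.
Import GRing.Theory.
Local Open Scope ring_scope.

(* A pp formula phi(x_0..x_{n-1}) for left R-modules:
     exists y_0..y_{m-1}, /\_{j<p} ( sum_i cx j i * x_i + sum_k cy j k * y_k = 0 ). *)
Record ppf (R : pzRingType) (n : nat) := PPF {
  ppf_bound : nat;
  ppf_eqs : nat;
  ppf_cx : 'I_ppf_eqs -> 'I_n -> R;
  ppf_cy : 'I_ppf_eqs -> 'I_ppf_bound -> R }.
Arguments ppf_bound {R n} p.
Arguments ppf_eqs {R n} p.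
Arguments ppf_cx {R n} p _ _.
Arguments ppf_cy {R n} p _ _.

Definition pp_sat_in (R : pzRingType) (n : nat) (phi : ppf R n) (M : lmodType R)
  (P : M -> Prop) (x : 'I_n -> M) : Prop :=
  exists y : 'I_(ppf_bound phi) -> M, (forall k, P (y k)) /\
    forall j, \sum_i ppf_cx phi j i *: x i + \sum_k ppf_cy phi j k *: y k = 0.

Definition pp_sat (R : pzRingType) (n : nat) (phi : ppf R n) (M : lmodType R)
  (x : 'I_n -> M) : Prop := pp_sat_in phi (fun _ => True) x.

(* A pure epimorphism: a surjective homomorphism whose kernel K is a pure
   submodule, i.e. phi(K) = K^n \cap phi(N) for every pp formula phi. *)
Definition pure_epi (R : pzRingType) (N M : lmodType R) (g : N -> M) : Prop :=
  linear g /\ (forall m, exists x, g x = m) /\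
  forall (n : nat) (phi : ppf R n) (x : 'I_n -> N),
    (forall i, g (x i) = 0) -> pp_sat phi x ->
    pp_sat_in phi (fun z => g z = 0) x.

Definition pure_projective (R : pzRingType) (P : lmodType R) : Prop :=
  forall (N M : lmodType R) (g : N -> M), pure_epi g ->
  forall f : P -> M, linear f ->
  exists h : P -> N, linear h /\ forall x, g (h x) = f x.

Definition is_direct_sum (R : pzRingType) (I : Type) (B : I -> lmodType R)
  (N : lmodType R) (inj : forall i, B i -> N) : Prop :=
  (forall i, linear (inj i)) /\
  forall (X : lmodType R) (f : forall i, B i -> X), (forall i, linear (f i)) ->
    exists g : N -> X, [/\ linear g, (forall i x, g (inj i x) = f i x) &
      forall g' : N -> X, linear g' -> (forall i x, g' (inj i x) = f i x) ->
        forall z, g' z = g z].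
Arguments is_direct_sum {R I} B N inj.

Definition PGen (R : pzRingType) (B : lmodType R -> Prop) (M : lmodType R) : Prop :=
  exists (I : Type) (Bf : I -> lmodType R) (N : lmodType R)
         (inj : forall i, Bf i -> N),
    (forall i, B (Bf i)) /\ is_direct_sum Bf N inj /\
    exists g : N -> M, pure_epi g.

(* Closed under finite direct sums (binary direct sums; the trivial one-term
   case is automatic): a direct sum of two members is (up to iso) a member. *)
Definition closed_fin_dsum (R : pzRingType) (B : lmodType R -> Prop) : Prop :=
  forall B1 B2 : lmodType R, B B1 -> B B2 ->
  exists (D : lmodType R)
         (inj : forall b : bool, (if b then B1 else B2) -> D),
    B D /\ is_direct_sum (fun b : bool => if b then B1 else B2) D inj.

Definition purely_resolving (R : pzRingType) (L : lmodType R -> Prop) : Prop :=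
  exists B : lmodType R -> Prop,
    [/\ forall P, B P -> pure_projective P, closed_fin_dsum B &
        forall M, L M <-> PGen B M].

Definition free_realization (R : pzRingType) (X : lmodType R -> Prop)
  (M : lmodType R) (n : nat) (m : 'I_n -> M) (phi : ppf R n) : Prop :=
  pp_sat phi m /\
  forall (Y : lmodType R), X Y -> forall c : 'I_n -> Y, pp_sat phi c ->
    exists h : M -> Y, linear h /\ forall i, h (m i) = c i.

Definition strict_atomic (R : pzRingType) (X : lmodType R -> Prop)
  (M : lmodType R) : Prop :=
  forall (n : nat) (m : 'I_n -> M), exists phi : ppf R n, free_realization X m phi.

Definition strict_ML (R : pzRingType) (M : lmodType R) : Prop :=
  strict_atomic (fun _ => True) M.

(* Main.v *)
Require Import Defs.
From mathcomp Require Import all_boot all_order all_algebra.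
From HB Require Import structures.
From mathcomp Require Import boolp.
From Stdlib Require Import ClassicalEpsilon.
Set Warnings "-notation-overridden,-ambiguous-paths,-redundant-canonical-projection".
Set Implicit Arguments. Unset Strict Implicit. Unset Printing Implicit Defensive.
Import GRing.Theory.
Local Open Scope ring_scope.

Definition evalX (R : pzRingType) (T : Type) (W : lmodType R) (f : T -> W)
  (l : seq (R * T)) : W := \sum_(ct <- l) ct.1 *: f ct.2.

Definition equivX (R : pzRingType) (T : Type)
  (adm : forall W : lmodType R, (T -> W) -> Prop) (l1 l2 : seq (R * T)) : Prop :=
  forall W f, adm W f -> evalX f l1 = evalX f l2.

Definition repX (R : pzRingType) (T : Type)
  (adm : forall W : lmodType R, (T -> W) -> Prop) (l : seq (R * T)) :=
  epsilon (inhabits l) (equivX adm l).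

Definition Pres (R : pzRingType) (T : Type)
  (adm : forall W : lmodType R, (T -> W) -> Prop) :=
  {l : seq (R * T) | repX adm l = l}.

HB.instance Definition _ R T adm := gen_eqMixin (@Pres R T adm).
HB.instance Definition _ R T adm := gen_choiceMixin (@Pres R T adm).

Section PresTheory.
Variables (R : pzRingType) (T : Type) (adm : forall W : lmodType R, (T -> W) -> Prop).

Lemma evalX_cat (W : lmodType R) (f : T -> W) l1 l2 : evalX f (l1 ++ l2) = evalX f l1 + evalX f l2.
Proof. by rewrite /evalX big_cat. Qed.

Lemma equivX_refl l : equivX adm l l. Proof. by []. Qed.

Lemma repX_equiv l : equivX adm l (repX adm l).
Proof. rewrite /repX; apply: (epsilon_spec (inhabits l) (equivX adm l)); exists l; exact: equivX_refl. Qed.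

Lemma repX_eq l1 l2 : equivX adm l1 l2 -> repX adm l1 = repX adm l2.
Proof.
move=> e; rewrite /repX.
have -> : equivX adm l1 = equivX adm l2.
  apply: funext => l; apply: propext; split => h W f hf.
  - by rewrite -(e W f hf) (h W f hf).
  - by rewrite (e W f hf) (h W f hf).
have -> : inhabits l1 = inhabits l2 by apply: Prop_irrelevance.
by [].
Qed.

Lemma repX_idem l : repX adm (repX adm l) = repX adm l.
Proof. apply: repX_eq => W f hf; by rewrite -(repX_equiv l hf). Qed.

Definition piP (l : seq (R * T)) : Pres adm := exist _ (repX adm l) (repX_idem l).

Lemma evP (a b : Pres adm) :
  (forall (W : lmodType R) (f : T -> W), adm f -> evalX f (sval a) = evalX f (sval b)) -> a = b.
Proof.
move=> e; case: a b e => [la ha] [lb hb] /= e.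
have E : la = lb by rewrite -ha -hb; apply: repX_eq.
subst lb; congr exist; exact: Prop_irrelevance.
Qed.

Lemma ev_pi (W : lmodType R) (f : T -> W) l : adm f -> evalX f (sval (piP l)) = evalX f l.
Proof. by move=> hf; rewrite /= -(repX_equiv l hf). Qed.

Definition negL (l : seq (R * T)) := map (fun ct => (- ct.1, ct.2)) l.
Definition sclL (r : R) (l : seq (R * T)) := map (fun ct => (r * ct.1, ct.2)) l.

Lemma evalX_neg (W : lmodType R) (f : T -> W) l : evalX f (negL l) = - evalX f l.
Proof. by rewrite /evalX big_map -sumrN; apply: eq_bigr => ct _; rewrite scaleNr. Qed.

Lemma evalX_scl (W : lmodType R) (f : T -> W) r l : evalX f (sclL r l) = r *: evalX f l.
Proof. by rewrite /evalX big_map scaler_sumr; apply: eq_bigr => ct _; rewrite scalerA. Qed.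

Lemma evalX_nil (W : lmodType R) (f : T -> W) : evalX f [::] = 0.
Proof. by rewrite /evalX big_nil. Qed.

Definition zeroP : Pres adm := piP [::].
Definition addP (a b : Pres adm) : Pres adm := piP (sval a ++ sval b).
Definition oppP (a : Pres adm) : Pres adm := piP (negL (sval a)).
Definition scaleP (r : R) (a : Pres adm) : Pres adm := piP (sclL r (sval a)).

Ltac evt := apply: evP => W f hf; rewrite ?ev_pi ?evalX_cat ?evalX_neg ?evalX_scl ?evalX_nil ?ev_pi ?evalX_cat ?evalX_neg ?evalX_scl ?evalX_nil //.

Lemma addPA : associative addP.
Proof. move=> a b c; evt. rewrite GRing.addrA. by []. Qed.
Lemma addPC : commutative addP.
Proof. by move=> a b; evt; rewrite addrC. Qed.
Lemma add0P : left_id zeroP addP.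
Proof. by move=> a; evt; rewrite add0r. Qed.
Lemma addNP : left_inverse zeroP oppP addP.
Proof. by move=> a; evt; rewrite addNr. Qed.

End PresTheory.

HB.instance Definition _ R T adm :=
  GRing.isZmodule.Build (@Pres R T adm) (@addPA R T adm) (@addPC R T adm) (@add0P R T adm) (@addNP R T adm).

Section PresLmod.
Variables (R : pzRingType) (T : Type) (adm : forall W : lmodType R, (T -> W) -> Prop).
Local Notation D := (@Pres R T adm).

Lemma ev_add (W : lmodType R) (f : T -> W) (a b : D) : adm f ->
  evalX f (sval (a + b)) = evalX f (sval a) + evalX f (sval b).
Proof. by move=> hf; rewrite /= -(repX_equiv _ hf) evalX_cat. Qed.

Ltac evt := apply: evP => W f hf; rewrite ?ev_pi ?ev_add ?evalX_cat ?evalX_neg ?evalX_scl ?evalX_nil ?ev_pi ?ev_add ?evalX_cat ?evalX_neg ?evalX_scl ?evalX_nil //.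

Lemma scalePA (a b : R) (v : D) : scaleP a (scaleP b v) = scaleP (a * b) v.
Proof. by evt; rewrite GRing.scalerA. Qed.
Lemma scaleP1 : left_id 1 (@scaleP R T adm).
Proof. by move=> v; evt; rewrite GRing.scale1r. Qed.
Lemma scalePDr : right_distributive (@scaleP R T adm) +%R.
Proof. by move=> a u v; evt; rewrite GRing.scalerDr. Qed.
Lemma scalePDl (v : D) : {morph (@scaleP R T adm)^~ v : a b / a + b}.
Proof. by move=> a b; evt; rewrite GRing.scalerDl. Qed.
End PresLmod.

HB.instance Definition _ R T adm :=
  GRing.Zmodule_isLmodule.Build R (@Pres R T adm) (@scalePA R T adm) (@scaleP1 R T adm) (@scalePDr R T adm) (@scalePDl R T adm).


Section Lin.
Variables (R : pzRingType) (U V : lmodType R) (f : U -> V) (hf : linear f).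
Lemma lin0 : f 0 = 0.
Proof. have := hf (-1) 0 0. by rewrite GRing.scaleN1r GRing.addNr GRing.scaleN1r GRing.addNr. Qed.
Lemma linD u v : f (u + v) = f u + f v.
Proof. by have := hf 1 u v; rewrite !GRing.scale1r. Qed.
Lemma linZ a u : f (a *: u) = a *: f u.
Proof. by have := hf a u 0; rewrite !GRing.addr0 lin0 GRing.addr0. Qed.
Lemma linN u : f (- u) = - f u.
Proof. by rewrite -GRing.scaleN1r linZ GRing.scaleN1r. Qed.
Lemma linB u v : f (u - v) = f u - f v.
Proof. by rewrite linD linN. Qed.
Lemma linsum (I : Type) (r : seq I) (P : pred I) (F : I -> U) :
  f (\sum_(i <- r | P i) F i) = \sum_(i <- r | P i) f (F i).
Proof.
elim: r => [|x r IH]; first by rewrite !big_nil lin0.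
by rewrite !big_cons; case: (P x); rewrite ?linD IH.
Qed.
End Lin.

Lemma lin_comp (R : pzRingType) (U V W : lmodType R) (f : U -> V) (g : V -> W) :
  linear f -> linear g -> linear (g \o f).
Proof. by move=> hf hg a u v /=; rewrite hf hg. Qed.

Lemma lin_id (R : pzRingType) (U : lmodType R) : linear (@id U).
Proof. by []. Qed.

Lemma pp_sat_lin (R : pzRingType) (U V : lmodType R) (f : U -> V) (hf : linear f)
  n (phi : ppf R n) (x : 'I_n -> U) : pp_sat phi x -> pp_sat phi (f \o x).
Proof.
case=> y [_ hy]; exists (f \o y); split => // j /=.
rewrite (eq_bigr (fun i => f (ppf_cx phi j i *: x i))); last by move=> i _; rewrite (linZ hf).
rewrite (eq_bigr (fun i => f (ppf_cy phi j i *: y i))); last by move=> i _; rewrite (linZ hf).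
by rewrite -!(linsum hf) -(linD hf) hy (lin0 hf).
Qed.

Section PresUniv.
Variables (R : pzRingType) (T : Type) (adm : forall W : lmodType R, (T -> W) -> Prop).
Local Notation D := (@Pres R T adm).

Definition genP (t : T) : D := piP adm [:: (1, t)].
Definition liftP (W : lmodType R) (f : T -> W) (a : D) : W := evalX f (sval a).

Lemma liftP_lin (W : lmodType R) (f : T -> W) : adm f -> linear (liftP f).
Proof.
move=> hf a u v; rewrite /liftP (ev_add _ _ hf).
by rewrite /= -(repX_equiv _ hf) evalX_scl.
Qed.

Lemma liftP_gen (W : lmodType R) (f : T -> W) t : adm f -> liftP f (genP t) = f t.
Proof. by move=> hf; rewrite /liftP ev_pi // /evalX big_cons big_nil GRing.addr0 GRing.scale1r. Qed.

Lemma sepP (a b : D) :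
  (forall (W : lmodType R) (f : T -> W), adm f -> liftP f a = liftP f b) -> a = b.
Proof. exact: evP. Qed.

Lemma liftP_comb (W : lmodType R) (f : T -> W) (l : seq (R * T)) : adm f ->
  liftP f (\sum_(ct <- l) ct.1 *: genP ct.2) = evalX f l.
Proof.
move=> hf; rewrite (linsum (liftP_lin hf)) /evalX; apply: eq_bigr => ct _.
by rewrite (linZ (liftP_lin hf)) liftP_gen.
Qed.

Lemma combP (a : D) : a = \sum_(ct <- sval a) ct.1 *: genP ct.2.
Proof. by apply: sepP => W f hf; rewrite liftP_comb. Qed.
End PresUniv.


Record Block (R : pzRingType) (P : lmodType R) := Blk {
  bn : nat; bth : ppf R bn; bp : 'I_bn -> P; bw : 'I_(ppf_bound bth) -> P;
  bok : forall j, \sum_i ppf_cx bth j i *: bp i + \sum_k ppf_cy bth j k *: bw k = 0 }.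

Definition GenT (R : pzRingType) (P : lmodType R) :=
  {b : Block P & ('I_(bn b) + 'I_(ppf_bound (bth b)))%type}.

Definition relsum (R : pzRingType) (P : lmodType R) (W : lmodType R)
  (f : GenT P -> W) (b : Block P) (j : 'I_(ppf_eqs (bth b))) : W :=
  \sum_i ppf_cx (bth b) j i *: f (existT _ b (inl i)) +
  \sum_k ppf_cy (bth b) j k *: f (existT _ b (inr k)).

Arguments relsum {R P W} f b j.

Definition admB (R : pzRingType) (P : lmodType R) (W : lmodType R) (f : GenT P -> W) : Prop :=
  forall b j, relsum f b j = 0.

Definition DP (R : pzRingType) (P : lmodType R) := @Pres R (GenT P) (@admB R P).

Section DPth.
Variables (R : pzRingType) (P : lmodType R).
Local Notation D := (DP P).

Definition fP (t : GenT P) : P :=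
  match t with existT b (inl i) => bp i | existT b (inr k) => bw k end.

Lemma fP_adm : admB fP.
Proof. by move=> b j; rewrite /relsum /= bok. Qed.

Definition gP : D -> P := liftP fP.

Lemma gP_lin : linear gP.
Proof. exact: liftP_lin fP_adm. Qed.

Lemma gen_rel b j :
  \sum_i ppf_cx (bth b) j i *: (genP (@admB R P) (existT _ b (inl i)) : D) +
  \sum_k ppf_cy (bth b) j k *: (genP (@admB R P) (existT _ b (inr k)) : D) = 0.
Proof.
apply: sepP => W f hf.
have hl := liftP_lin hf.
rewrite (linD hl) !(linsum hl) (lin0 hl).
rewrite -[RHS](hf b j) /relsum; congr (_ + _); apply: eq_bigr => i _;
by rewrite (linZ hl) liftP_gen.
Qed.

Lemma lift_pp n (th : ppf R n) (p : 'I_n -> P) (w : 'I_(ppf_bound th) -> P)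
  (ok : forall j, \sum_i ppf_cx th j i *: p i + \sum_k ppf_cy th j k *: w k = 0) :
  exists x : 'I_n -> D, (forall i, gP (x i) = p i) /\ pp_sat th x.
Proof.
pose b := Blk ok.
exists (fun i => genP (@admB R P) (existT _ b (inl i))); split.
  by move=> i; rewrite /gP liftP_gen //; exact: fP_adm.
exists (fun k => genP (@admB R P) (existT _ b (inr k))); split => // j.
exact: (gen_rel (b:=b) j).
Qed.

Lemma gP_surj (m : P) : exists x : D, gP x = m.
Proof.
pose th : ppf R 1 := @PPF R 1 0 0 (fun _ _ => 0) (fun _ _ => 0).
have ok : forall j, \sum_i ppf_cx th j i *: (fun _ => m) i +
   \sum_k ppf_cy th j k *: (fun k : 'I_0 => m) k = 0 by case.
have [x [hx _]] := lift_pp ok.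
by exists (x ord0); rewrite hx.
Qed.

Lemma gP_pure : pure_epi gP.
Proof.
split; first exact: gP_lin.
split; first exact: gP_surj.
move=> n th x hx [y [_ hy]].
pose z := fun k => gP (y k).
pose th' : ppf R (ppf_bound th) :=
  @PPF R _ 0 (ppf_eqs th) (ppf_cy th) (fun _ _ => 0).
have ok : forall j, \sum_i ppf_cx th' j i *: z i +
   \sum_k ppf_cy th' j k *: (fun k : 'I_0 => 0 : P) k = 0.
  move=> j; rewrite big_ord0 GRing.addr0 /=.
  have := congr1 gP (hy j).
  rewrite (linD gP_lin) !(linsum gP_lin) (lin0 gP_lin).
  rewrite (eq_bigr (fun _ => 0)); last by move=> i _; rewrite (linZ gP_lin) hx GRing.scaler0.
  rewrite big1_eq GRing.add0r => e; rewrite -[RHS]e.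
  by apply: eq_bigr => k _; rewrite (linZ gP_lin).
have [t [ht [u [_ hu]]]] := lift_pp ok.
exists (fun k => y k - t k); split.
  by move=> k; rewrite (linB gP_lin) ht GRing.subrr.
move=> j; have := hu j; rewrite big_ord0 GRing.addr0 /= => htj.
rewrite (eq_bigr (fun k => ppf_cy th j k *: y k - ppf_cy th j k *: t k));
  last by move=> k _; rewrite GRing.scalerBr.
by rewrite sumrB htj GRing.subr0 hy.
Qed.
End DPth.


Section Coef.
Variables (R : pzRingType) (T : eqType) (W : lmodType R) (S : seq T).

Definition extv (y : 'I_(size S) -> W) (v : nat) : W :=
  match insub v with Some i => y i | None => 0 end.
Definition fy (y : 'I_(size S) -> W) (t : T) : W := extv y (index t S).
Definition coefl (l : seq (R * T)) (v : nat) : R :=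
  \sum_(ct <- l | index ct.2 S == v) ct.1.

Lemma fy_in (y : 'I_(size S) -> W) t (h0 : (index t S < size S)%N) :
  fy y t = y (Ordinal h0).
Proof. by rewrite /fy /extv insubT /=; congr y; apply: val_inj. Qed.

Lemma fy_out (y : 'I_(size S) -> W) t : t \notin S -> fy y t = 0.
Proof. by move=> ht; rewrite /fy /extv insubF // index_mem; apply: negbTE. Qed.

Lemma eval_coef (y : 'I_(size S) -> W) (l : seq (R * T)) :
  all (fun ct => ct.2 \in S) l ->
  evalX (fy y) l = \sum_(v < size S) coefl l v *: y v.
Proof.
elim: l => [|[c t] l IH] /=.
  move=> _; rewrite /evalX big_nil big1 // => v _.
  by rewrite /coefl big_nil GRing.scale0r.
case/andP=> ht hl; rewrite /evalX big_cons /= -/(evalX _ _) IH //.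
rewrite /coefl.
rewrite [RHS](eq_bigr (fun v : 'I_(size S) => (if index t S == v then c else 0) *: y v +
   (\sum_(ct <- l | index ct.2 S == v) ct.1) *: y v)); last first.
  by move=> v _; rewrite big_cons /=; case: eqP => _; rewrite ?GRing.add0r ?GRing.scale0r ?GRing.add0r // GRing.scalerDl.
rewrite big_split /=; congr (_ + _).
have hlt : (index t S < size S)%N by rewrite index_mem.
rewrite (bigD1 (Ordinal hlt)) //= ?eqxx big1 ?GRing.addr0.
  by rewrite (fy_in _ hlt).
move=> v hv; case: eqP => e; last by rewrite GRing.scale0r.
by exfalso; move/eqP: hv; apply; apply: val_inj.
Qed.
End Coef.


HB.instance Definition _ (R : pzRingType) (P : lmodType R) := gen_eqMixin (Block P).

Lemma evalX_eq_in (R : pzRingType) (T : eqType) (W : lmodType R) (f g : T -> W) l :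
  (forall ct, ct \in l -> f ct.2 = g ct.2) -> evalX f l = evalX g l.
Proof. by move=> h; rewrite /evalX; apply: eq_big_seq => ct /h ->. Qed.

Lemma sum_delta (R : pzRingType) (V : lmodType R) n (x : 'I_n -> V) j :
  \sum_i (j == i)%:R *: x i = x j.
Proof.
rewrite (bigD1 j) //= eqxx GRing.scale1r big1 ?GRing.addr0 // => i hi.
by rewrite eq_sym (negbTE hi) GRing.scale0r.
Qed.

Section ML.
Variables (R : pzRingType) (P : lmodType R).
Local Notation T := (GenT P).
Local Notation D := (DP P).

Definition tl (b : Block P) (i : 'I_(bn b)) : T := existT _ b (inl i).
Definition tr (b : Block P) (k : 'I_(ppf_bound (bth b))) : T := existT _ b (inr k).

Arguments tl : clear implicits.
Arguments tr : clear implicits.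
Definition gens (b : Block P) : seq T :=
  [seq tl b i | i <- enum 'I_(bn b)] ++ [seq tr b k | k <- enum 'I_(ppf_bound (bth b))].

Definition rl (b : Block P) (j : 'I_(ppf_eqs (bth b))) : seq (R * T) :=
  [seq (ppf_cx (bth b) j i, tl b i) | i <- enum 'I_(bn b)] ++
  [seq (ppf_cy (bth b) j k, tr b k) | k <- enum 'I_(ppf_bound (bth b))].
Arguments rl : clear implicits.

Lemma evalX_rl (W : lmodType R) (f : T -> W) b j : evalX f (rl b j) = relsum f b j.
Proof. by rewrite /evalX big_cat !big_map -!enumT !big_enum. Qed.

Lemma gens_b t b : t \in gens b -> projT1 t = b.
Proof. by rewrite mem_cat => /orP[] /mapP [i _ ->]. Qed.

Lemma t_gens (t : T) : t \in gens (projT1 t).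
Proof.
case: t => b [i|k]; rewrite mem_cat; apply/orP; [left|right];
  apply/mapP; by [exists i; rewrite ?mem_enum | exists k; rewrite ?mem_enum].
Qed.

Lemma rl_supp b j : all (fun ct => ct.2 \in gens b) (rl b j).
Proof.
apply/allP => ct; rewrite mem_cat => /orP[] /mapP [i _ ->] /=; exact: t_gens.
Qed.

Local Notation gen := (genP (@admB R P)).

Lemma DP_ML n (d : 'I_n -> D) : exists psi : ppf R n, pp_sat psi d /\
  forall (Y : lmodType R) (c : 'I_n -> Y), pp_sat psi c ->
    exists h : D -> Y, linear h /\ forall i, h (d i) = c i.
Proof.
pose ls i := sval (d i).
pose L := flatten [seq ls i | i <- enum 'I_n].
pose bs := [seq projT1 ct.2 | ct <- L].
pose S := flatten [seq gens b | b <- bs].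
pose rs := flatten [seq [seq rl b j | j <- enum 'I_(ppf_eqs (bth b))] | b <- bs].
have hS : forall b, b \in bs -> forall t, t \in gens b -> t \in S.
  by move=> b hb t ht; apply/flatten_mapP; exists b.
have hSinv : forall t, t \in S -> projT1 t \in bs.
  by move=> t /flatten_mapP [b hb /gens_b ->].
have hls : forall i, all (fun ct => ct.2 \in S) (ls i).
  move=> i; apply/allP => ct hct; apply: (hS (projT1 ct.2)); last exact: t_gens.
  apply/mapP; exists ct => //; apply/flatten_mapP; exists i; [by rewrite mem_enum | exact: hct].
have hrs : forall r, r \in rs -> exists b j, r = rl b j /\ b \in bs.
  by move=> r /flatten_mapP [b hb /mapP [j _ ->]]; exists b, j.
have hrsupp : forall r, r \in rs -> all (fun ct => ct.2 \in S) r.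
  move=> r /hrs [b [j [-> hb]]]; apply/allP => ct hct.
  apply: (hS b hb); exact: (allP (rl_supp (b:=b) j) ct hct).
have hrl : forall b j, b \in bs -> rl b j \in rs.
  move=> b j hb; apply/flatten_mapP; exists b => //; apply/mapP; exists j => //.
  by rewrite mem_enum.
pose psi := @PPF R n (size S) (n + size rs)
  (fun j i => match split j with inl j' => (j' == i)%:R | inr _ => 0 end)
  (fun j v => match split j with inl j' => - coefl S (ls j') v
                                 | inr r => coefl S (nth [::] rs r) v end).
have psiE : forall (Y : lmodType R) (x : 'I_n -> Y) (y : 'I_(size S) -> Y),
   (forall j, \sum_i ppf_cx psi j i *: x i + \sum_k ppf_cy psi j k *: y k = 0) <->
   ((forall i, x i = evalX (fy y) (ls i)) /\
    (forall r, r \in rs -> evalX (fy y) r = 0)).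
  move=> Y x y.
  have e1 : forall i, \sum_i0 ppf_cx psi (lshift _ i) i0 *: x i0 +
     \sum_k ppf_cy psi (lshift _ i) k *: y k = x i - evalX (fy y) (ls i).
    move=> i; rewrite /= (unsplitK (inl i) : split (lshift _ i) = inl i) sum_delta.
    rewrite eval_coef // -sumrN; congr (_ + _); apply: eq_bigr => v _.
    by rewrite GRing.scaleNr.
  have e2 : forall r : 'I_(size rs), \sum_i0 ppf_cx psi (rshift n r) i0 *: x i0 +
     \sum_k ppf_cy psi (rshift n r) k *: y k = evalX (fy y) (nth [::] rs r).
    move=> r; rewrite /= (unsplitK (inr r) : split (rshift n r) = inr r).
    rewrite big1 ?GRing.add0r; last by move=> i _; rewrite GRing.scale0r.
    by rewrite eval_coef // hrsupp // mem_nth.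
  split.
    move=> h; split.
      by move=> i; apply/eqP; rewrite -GRing.subr_eq0 -e1 h.
    move=> r hr; have hlt : (index r rs < size rs)%N by rewrite index_mem.
    by have := h (rshift n (Ordinal hlt)); rewrite e2 /= nth_index.
  case=> h1 h2 j; case: (split_ordP j) => [j' ->| r ->].
    by rewrite e1 h1 GRing.subrr.
  by rewrite e2 h2 // mem_nth.
exists psi; split.
  pose w := fun v : 'I_(size S) => gen (tnth (in_tuple S) v).
  exists w; split => //; apply/psiE.
  have hw : forall l, all (fun ct => ct.2 \in S) l -> evalX (fy w) l = evalX gen l.
    move=> l hl; apply: evalX_eq_in => ct hct.
    have hin : ct.2 \in S := allP hl ct hct.
    have hlt : (index ct.2 S < size S)%N by rewrite index_mem.
    by rewrite (fy_in _ hlt) /w (tnth_nth ct.2) /= nth_index.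
  split.
    by move=> i; rewrite hw // {1}(combP (d i)).
  move=> r hr; rewrite hw ?hrsupp //.
  have [b [j [-> _]]] := hrs r hr.
  rewrite evalX_rl; exact: (gen_rel (b:=b) j).
move=> Y c [y [_ /psiE [h1 h2]]].
have adm : admB (fy y).
  move=> b j; case: (boolP (b \in bs)) => hb.
    by rewrite -evalX_rl h2 // hrl.
  have h0 : forall t, t \in gens b -> fy y t = 0.
    move=> t ht; apply: fy_out; apply/negP => /hSinv.
    by rewrite (gens_b ht) (negbTE hb).
  rewrite /relsum !big1 ?GRing.addr0 // => i _; rewrite h0 ?GRing.scaler0 //;
    rewrite mem_cat; apply/orP; [right|left]; apply/mapP;
    by [exists i; rewrite ?mem_enum].
exists (liftP (fy y)); split; first exact: liftP_lin.
by move=> i; rewrite h1.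
Qed.
End ML.


Definition ML_tuple (R : pzRingType) (P : lmodType R) n (x : 'I_n -> P) :=
  exists psi : ppf R n, pp_sat psi x /\
  forall (Y : lmodType R) (c : 'I_n -> Y), pp_sat psi c ->
    exists h : P -> Y, linear h /\ forall i, h (x i) = c i.

Lemma pp_sat_ext (R : pzRingType) (U : lmodType R) n (phi : ppf R n) (x x' : 'I_n -> U) :
  (forall i, x i = x' i) -> pp_sat phi x -> pp_sat phi x'.
Proof. by move=> e; have -> : x = x' by apply: funext. Qed.

Lemma pureproj_ML (R : pzRingType) (P : lmodType R) : pure_projective P ->
  forall n (x : 'I_n -> P), ML_tuple x.
Proof.
move=> hP n x.
have [s [hs hgs]] := hP (DP P) P (@gP R P) (@gP_pure R P) id (@lin_id R P).
have [psi [hd hfree]] := DP_ML (s \o x).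
exists psi; split.
  apply: (pp_sat_ext (x := (@gP R P) \o (s \o x))); first by move=> i; apply: hgs.
  by have := pp_sat_lin (@gP_lin R P) hd.
move=> Y c hc; have [k [hk hki]] := hfree Y c hc.
by exists (k \o s); split; [exact: lin_comp | move=> i; apply: hki].
Qed.

Lemma dsum_pureproj (R : pzRingType) (I : Type) (Bf : I -> lmodType R) (N : lmodType R)
  (inj : forall i, Bf i -> N) :
  is_direct_sum Bf N inj -> (forall i, pure_projective (Bf i)) -> pure_projective N.
Proof.
move=> [hinj hu] hB N' M' g hg f hf.
have H : forall i, exists h : Bf i -> N', linear h /\ forall x, g (h x) = f (inj i x).
  move=> i; exact: (hB i N' M' g hg (f \o inj i) (lin_comp (hinj i) hf)).
pose h i := proj1_sig (constructive_indefinite_description _ (H i)).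
have hh : forall i, linear (h i) /\ forall x, g (h i x) = f (inj i x).
  move=> i; exact: (proj2_sig (constructive_indefinite_description _ (H i))).
have [G [hG hGi _]] := hu N' h (fun i => (hh i).1).
exists G; split => //.
have [G0 [_ _ huniq]] := hu M' (fun i => f \o inj i) (fun i => lin_comp (hinj i) hf).
move=> z.
have e1 : (g \o G) z = G0 z.
  apply: huniq; first exact: lin_comp hG hg.1.
  by move=> i y /=; rewrite hGi (hh i).2.
have e2 : f z = G0 z by apply: huniq.
by rewrite /= in e1; rewrite e1 e2.
Qed.

Lemma pure_epi_lift (R : pzRingType) (N M : lmodType R) (g : N -> M) :
  pure_epi g -> forall n (phi : ppf R n) (m : 'I_n -> M), pp_sat phi m ->
  exists x : 'I_n -> N, pp_sat phi x /\ forall i, g (x i) = m i.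
Proof.
move=> [hg [hsurj hpure]] n phi m [w [_ hw]].
pose lift (z : M) := proj1_sig (constructive_indefinite_description _ (hsurj z)).
have hlift : forall z, g (lift z) = z.
  move=> z; exact: (proj2_sig (constructive_indefinite_description _ (hsurj z))).
pose x0 i := lift (m i).
pose w0 k := lift (w k).
pose nb := ppf_bound phi.
pose kk j := \sum_i ppf_cx phi j i *: x0 i + \sum_k ppf_cy phi j k *: w0 k.
pose th := @PPF R (ppf_eqs phi) (n + nb) (ppf_eqs phi) (fun j j0 => (j == j0)%:R)
  (fun j v => match split v with inl i => - ppf_cx phi j i | inr k => - ppf_cy phi j k end).
have hkk : forall j, g (kk j) = 0.
  move=> j; rewrite /kk (linD hg) !(linsum hg) -[RHS](hw j); congr (_ + _);
  apply: eq_bigr => i _; by rewrite (linZ hg) hlift.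
have thE : forall (u : 'I_(n + nb) -> N) j,
  \sum_j0 ppf_cx th j j0 *: kk j0 + \sum_v ppf_cy th j v *: u v =
  kk j - (\sum_i ppf_cx phi j i *: u (lshift nb i) + \sum_k ppf_cy phi j k *: u (rshift n k)).
  move=> u j; rewrite sum_delta big_split_ord /=; congr (_ + _).
  rewrite GRing.opprD -!sumrN; congr (_ + _); apply: eq_bigr => i _.
    by rewrite (unsplitK (inl i) : split (lshift nb i) = inl i) GRing.scaleNr.
  by rewrite (unsplitK (inr i) : split (rshift n i) = inr i) GRing.scaleNr.
have hsat : pp_sat th kk.
  exists (fun v => match split v with inl i => x0 i | inr k => w0 k end); split => // j.
  rewrite thE.
  rewrite (eq_bigr (fun i => ppf_cx phi j i *: x0 i)); last first.
    by move=> i _; rewrite (unsplitK (inl i) : split (lshift nb i) = inl i).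
  rewrite [X in _ - (_ + X)](eq_bigr (fun k => ppf_cy phi j k *: w0 k)); last first.
    by move=> k _; rewrite (unsplitK (inr k) : split (rshift n k) = inr k).
  by rewrite GRing.subrr.
have [u [hu0 hu]] := hpure _ th kk hkk hsat.
exists (fun i => x0 i - u (lshift nb i)); split; last first.
  by move=> i; rewrite (linB hg) hu0 GRing.subr0 hlift.
exists (fun k => w0 k - u (rshift n k)); split => // j.
have := hu j; rewrite thE => e.
rewrite (eq_bigr (fun i => ppf_cx phi j i *: x0 i - ppf_cx phi j i *: u (lshift nb i)));
  last by move=> i _; rewrite GRing.scalerBr.
rewrite [X in _ + X](eq_bigr (fun k => ppf_cy phi j k *: w0 k - ppf_cy phi j k *: u (rshift n k)));
  last by move=> k _; rewrite GRing.scalerBr.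
rewrite !sumrB GRing.addrACA -GRing.opprD.
exact: e.
Qed.

Lemma id_pure_epi (R : pzRingType) (N : lmodType R) : pure_epi (@id N).
Proof.
split; first exact: lin_id.
split; first by move=> m; exists m.
move=> n phi x hx _; exists (fun _ => 0); split => // j.
rewrite !big1 ?GRing.addr0 // => i _; by rewrite ?hx GRing.scaler0.
Qed.

Theorem corollary3p4 (R : pzRingType) (L : lmodType R -> Prop)
  (hL : purely_resolving L) (M : lmodType R)
  (hML : L M) (hat : strict_atomic L M) :
  strict_ML M.
Proof.
case: hL => B [hBP _ hLB].
have [I [Bf [N [inj [hB [hds [g hg]]]]]]] := (hLB M).1 hML.
have hNL : L N by apply/hLB; exists I, Bf, N, inj; split => //; split => //; exists id; exact: id_pure_epi.
have hNP : pure_projective N := dsum_pureproj hds (fun i => hBP _ (hB i)).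
move=> n m.
have [phi [hphi hfree]] := hat n m.
have [x [hx hgx]] := pure_epi_lift hg hphi.
have [psi [hpsi hpsif]] := pureproj_ML hNP x.
exists psi; split.
  apply: (pp_sat_ext (x := g \o x)); first by move=> i; apply: hgx.
  by have := pp_sat_lin hg.1 hpsi.
move=> Y _ c hc.
have [k [hk hki]] := hpsif Y c hc.
have [h [hh hhi]] := hfree N hNL x hx.
by exists (k \o h); split; [exact: lin_comp | move=> i /=; rewrite hhi hki].
Qed.
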